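(* Let $\bar{\mathcal{G}}=(\bar{\mathcal{V}},\bar{\mathcal{E}})$ be the edge localization graph of the communication graph $\mathcal{G}$ (as defined in the context), and let $L(\bar{\mathcal{G}})$ be its directed line graph. Then for every edge $e\in\bar{\mathcal{E}}$, \[ \kappa\bigl(L(\bar{\mathcal{G}}),e\bigr)\;\ge\;\kappa\bigl(\bar{\mathcal{G}},t(e)\bigr). \]
   Context: Setting. There are $N$ agents $\mathcal{V}=\{1,\dots,N\}$ in the plane. A set $\mathcal{S}$ of subtended angle measurements is given: an element $\alpha^{u}_{wv}\in\mathcal{S}$ (with $u,v,w$ distinct agents) is the counterclockwise angle in $[-\pi,\pi)$ measured at agent $u$ from the direction of agent $v$ to the direction of agent $w$; $\alpha^{u}_{wv}\in\mathcal{S}$ if and only if $\alpha^{u}_{vw}=-\alpha^{u}_{wv}\in\mathcal{S}$. The communication graph $\mathcal{G}=(\mathcal{V},\mathcal{E})$ is the directed graph whose edges are exactly the ordered pairs $(u,v),(v,u),(u,w),(w,u)$ for all $\alpha^{u}_{wv}\in\mathcal{S}$; it is symmetric and is assumed connected. Edge localization graph. For each edge $(u,v)\in\mathcal{E}$ such that there is no $w$ with $\alpha^{v}_{wu}\in\mathcal{S}$, introduce a new virtual vertex $\bar v^{u}$ (distinct for distinct such pairs $(u,v)$; it is co-located with agent $v$). Let $\mathcal{E}^{u}=\{(u,\bar v^{u}),(\bar v^{u},u) : (u,v)\in\mathcal{E},\ \nexists w \text{ with } \alpha^{v}_{wu}\in\mathcal{S}\}$ and $\mathcal{V}^{u}$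 the set of all these virtual vertices. Then $\bar{\mathcal{V}}=\bigl(\mathcal{V}\setminus\{u\in\mathcal{V}: \text{no } \alpha^{u}_{wv}\in\mathcal{S} \text{ for any } v,w\}\bigr)\cup\mathcal{V}^{u}$ and $\bar{\mathcal{E}}=\bigl(\mathcal{E}\setminus\{(u,v),(v,u): (u,v)\in\mathcal{E},\ \nexists w \text{ with }\alpha^{v}_{wu}\in\mathcal{S}\}\bigr)\cup\mathcal{E}^{u}$. For a directed edge $e=(u,v)$, $t(e)=u$ is its tail and $h(e)=v$ its head. The directed line graph $L(\mathcal{H})$ of a directed graph $\mathcal{H}=(V,E)$ has vertex set $E$ and a directed edge $(e_1,e_2)$ for every pair $e_1,e_2\in E$ with $h(e_1)=t(e_2)$. An oriented spanning tree of a directed graph with root $r$ is an acyclic subgraph containing all vertices in which every vertex other than $r$ has a directed path to $r$. $\kappa(\mathcal{H},r)$ denotes the number of oriented spanning trees of $\mathcal{H}$ rooted at $r$. *)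

(* Defs.v *)
From mathcomp Require Import all_boot.
Set Implicit Arguments. Unset Strict Implicit. Unset Printing Implicit Defensive.

Section Digraphs.
Variable V : finType.

Definition edge_rel (F : {set V * V}) : rel V := fun a b => (a, b) \in F.

Definition is_ost (Vs : {set V}) (E : {set V * V}) (r : V) (F : {set V * V}) :=
  [&& r \in Vs, F \subset E,
      [forall x in Vs,
         #|[set y | (x, y) \in F]| == (if x == r then 0 else 1)] &
      [forall x in Vs, connect (edge_rel F) x r]].

Definition kappa (Vs : {set V}) (E : {set V * V}) (r : V) : nat :=
  #|[set F : {set V * V} | is_ost Vs E r F]|.

Definition tail (e : V * V) : V := e.1.
Definition head (e : V * V) : V := e.2.

Definition line_edges (E : {set V * V}) : {set (V * V) * (V * V)} :=
  [set p | [&& p.1 \in E, p.2 \in E & head p.1 == tail p.2]].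

End Digraphs.

(* Agents are 'I_N.  A measurement alpha^u_{wv} is encoded by the triple
   ((u, w), v) : 'I_N * 'I_N * 'I_N; S is the set of present measurements. *)
Definition meas N := ('I_N * 'I_N * 'I_N)%type.

Definition comm_edges N (S : {set meas N}) : {set 'I_N * 'I_N} :=
  [set e | [exists t in S,
     [|| e == (t.1.1, t.2), e == (t.2, t.1.1),
         e == (t.1.1, t.1.2) | e == (t.1.2, t.1.1)]]].

Definition has_meas N (S : {set meas N}) (u : 'I_N) :=
  [exists t in S, t.1.1 == u].

(* (u,v) in E and there is no w with alpha^v_{wu} in S: needs a virtual
   vertex \bar v^u *)
Definition lonely N (S : {set meas N}) (u v : 'I_N) :=
  ((u, v) \in comm_edges S) && ~~ [exists w, ((v, w), u) \in S].

(* vertices of the edge localization graph: agents (inl u) and virtual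
   vertices inr (u, v) standing for \bar v^u *)
Definition ELvert N := ('I_N + ('I_N * 'I_N))%type.

Definition el_vertices N (S : {set meas N}) : {set ELvert N} :=
  [set x | match x with
           | inl u => has_meas S u
           | inr p => lonely S p.1 p.2
           end].

Definition el_edges N (S : {set meas N}) : {set ELvert N * ELvert N} :=
  [set e | match e with
           | (inl u, inl v) =>
               [&& (u, v) \in comm_edges S, ~~ lonely S u v & ~~ lonely S v u]
           | (inl u, inr p) => (p.1 == u) && lonely S p.1 p.2
           | (inr p, inl u) => (p.1 == u) && lonely S p.1 p.2
           | (inr _, inr _) => false
           end].

(* Main.v *)
Require Import Defs.
From mathcomp Require Import all_boot.
Set Implicit Arguments. Unset Strict Implicit. Unset Printing Implicit Defensive.

Section Gen.
Variables (V : finType) (Vs : {set V}) (E : {set V * V}) (e : V * V).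
Hypothesis Esym : forall a b, (a, b) \in E -> (b, a) \in E.
Hypothesis Eend : forall a b, (a, b) \in E -> a \in Vs.
Hypothesis eE : e \in E.
Let r := Defs.tail e.

Lemma Eend2 a b : (a, b) \in E -> b \in Vs.
Proof. by move/Esym/Eend. Qed.

Definition Tsucc (F : {set V * V}) (v : V) : V * V :=
  (v, odflt v [pick y | (v, y) \in F]).
Definition lsucc F f := if Defs.head f == r then e else Tsucc F (Defs.head f).
Definition Phi F : {set (V * V) * (V * V)} :=
  [set p | [&& p.1 \in E, p.1 != e & p.2 == lsucc F p.1]].

Lemma ost_succ F v : is_ost Vs E r F -> v \in Vs -> v != r -> Tsucc F v \in F.
Proof.
case/and4P=> _ _ /forall_inP Hd _ vV vr.
move: (Hd v vV); rewrite (negbTE vr) /Tsucc.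
case: pickP => [y Hy|H] //=.
suff -> : [set y | (v, y) \in F] = set0 by rewrite cards0.
by apply/setP=> y; rewrite !inE H.
Qed.

Lemma ost_uniq F v y : is_ost Vs E r F -> (v, y) \in F ->
  (Tsucc F v = (v, y)) /\ (v != r).
Proof.
move=> H vyF; have H' := H; case/and4P: H => _ /subsetP FE /forall_inP Hd _.
have vV : v \in Vs by apply: (Eend (FE _ vyF)).
move: (Hd v vV).
have yin : y \in [set y | (v, y) \in F] by rewrite inE.
case vr: (v == r) => /=.
  by rewrite cards_eq0 => /eqP E0; rewrite E0 inE in yin.
case/cards1P=> z Ez; move: yin; rewrite Ez inE => /eqP yz; subst z.
split => //.
 rewrite /Tsucc; case: pickP => [z Hz|H0] /=.
  have : z \in [set y | (v, y) \in F] by rewrite inE.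
  by rewrite Ez inE => /eqP ->.
by move: (H0 y); rewrite vyF.
Qed.

Lemma PhiP F f g : ((f, g) \in Phi F) = [&& f \in E, f != e & g == lsucc F f].
Proof. by rewrite inE. Qed.

Lemma lsuccE F f : is_ost Vs E r F -> f \in E -> lsucc F f \in E.
Proof.
move=> H fE; rewrite /lsucc; case: ifP => // hr.
have H' := H; case/and4P: H' => _ /subsetP FE _ _; apply: FE; apply: ost_succ => //.
  by case: f fE {hr} => a b /Eend2.
by rewrite hr.
Qed.

Lemma Phi_conn F : is_ost Vs E r F -> forall p v, path (edge_rel F) v p ->
  last v p = r -> forall f, f \in E -> Defs.head f = v ->
  connect (edge_rel (Phi F)) f e.
Proof.
move=> H; elim=> [|y p IH] v /=.
  move=> _ vr f fE hf; case fe: (f == e); first by rewrite (eqP fe) connect0.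
  apply: connect1; rewrite /edge_rel PhiP fE fe /lsucc hf vr !eqxx //.
move=> /andP[vyF pth] lst f fE hf.
case fe: (f == e); first by rewrite (eqP fe) connect0.
have [Ts vr] := ost_uniq H vyF.
have H' := H; case/and4P: H' => _ /subsetP FE _ _.
apply: (@connect_trans _ _ (v, y)).
  apply: connect1; rewrite /edge_rel PhiP fE fe /lsucc hf (negbTE vr) Ts !eqxx //.
by apply: (IH y) => //; apply: FE.
Qed.

Lemma Phi_ost F : is_ost Vs E r F -> is_ost E (line_edges E) e (Phi F).
Proof.
move=> H; have H' := H; case/and4P: H' => _ /subsetP FE _ /forall_inP Hc.
apply/and4P; split => //.
- apply/subsetP => [[f g]]; rewrite /Phi /line_edges !inE /= => /and3P[fE _ /eqP ->].
  rewrite fE lsuccE //= /lsucc; case: ifP => [/eqP -> //|_]; by [].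
- apply/forall_inP => f fE.
  case fe: (f == e).
    rewrite cards_eq0; apply/eqP/setP => g; rewrite !inE fe andbF //.
  apply/cards1P; exists (lsucc F f); apply/setP => g.
  by rewrite !inE fE fe.
- apply/forall_inP => f fE.
  case: f fE => a b abE.
  have bV : b \in Vs by apply: Eend2 abE.
  case/connectP: (Hc b bV) => p pth lst.
  by apply: (Phi_conn H pth (esym lst) abE).
Qed.

Lemma Phi_inj F1 F2 : is_ost Vs E r F1 -> is_ost Vs E r F2 ->
  Phi F1 = Phi F2 -> F1 = F2.
Proof.
move=> H1 H2 eqP12.
have L : forall f, f \in E -> f != e -> lsucc F1 f = lsucc F2 f.
  move=> f fE fe.
  have : (f, lsucc F1 f) \in Phi F2 by rewrite -eqP12 PhiP fE fe eqxx.
  by rewrite PhiP => /and3P[_ _ /eqP].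
have T : forall G1 G2, is_ost Vs E r G1 -> is_ost Vs E r G2 ->
   (forall f, f \in E -> f != e -> lsucc G1 f = lsucc G2 f) ->
   {subset G1 <= G2}.
  move=> G1 G2 K1 K2 LL [a b] abF.
  have [Ts ar] := ost_uniq K1 abF.
  have K1' := K1; case/and4P: K1' => _ /subsetP FE1 _ _.
  have K2' := K2; case/and4P: K2' => _ /subsetP FE2 _ _.
  have aV : a \in Vs by apply: Eend (FE1 _ abF).
  have s2 := ost_succ K2 aV ar.
  suff <- : Tsucc G2 a = (a, b) by [].
  set c := (Tsucc G2 a).2.
  have -> : Tsucc G2 a = (a, c) by [].
  have caE : (c, a) \in E by apply: Esym; apply: FE2.
  have baE : (b, a) \in E by apply: Esym; apply: FE1.
  have key : forall x, (x, a) \in E -> (x, a) != e -> (a, b) = (a, c).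
    move=> x xE xe; have := LL _ xE xe; rewrite /lsucc /= (negbTE ar) -Ts.
    by move=> ->.
  case: (eqVneq (b, a) e) => [be|bne]; last exact: (esym (key b baE bne)).
  case: (eqVneq (c, a) e) => [ce|cne]; last exact: (esym (key c caE cne)).
  by move: ce; rewrite -be => -[->].
apply/setP => x; apply/idP/idP; first exact: T.
apply: T => // f fE fe; by rewrite L.
Qed.

Lemma gen_kappa : kappa E (line_edges E) e >= kappa Vs E r.
Proof.
rewrite /kappa -(@card_in_imset _ _ Phi).
  apply: subset_leq_card; apply/subsetP => G /imsetP[F]; rewrite !inE => HF ->.
  exact: Phi_ost.
by move=> F1 F2; rewrite !inE; apply: Phi_inj.
Qed.
End Gen.

Lemma comm_sym N (S : {set meas N}) u v :
  (u, v) \in comm_edges S -> (v, u) \in comm_edges S.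
Proof.
rewrite !inE => /existsP[t /andP[tS H]]; apply/existsP; exists t; rewrite tS /=.
move: H; rewrite !xpair_eqE.
by case/or4P => /andP[/eqP -> /eqP ->]; rewrite !eqxx ?orbT.
Qed.

Lemma el_edgesE N (S : {set meas N}) a b : ((a, b) \in el_edges S) =
  match a, b with
  | inl u, inl v =>
      [&& (u, v) \in comm_edges S, ~~ lonely S u v & ~~ lonely S v u]
  | inl u, inr p => (p.1 == u) && lonely S p.1 p.2
  | inr p, inl u => (p.1 == u) && lonely S p.1 p.2
  | inr _, inr _ => false
  end.
Proof. by rewrite /el_edges in_set. Qed.

Lemma el_verticesE N (S : {set meas N}) x : (x \in el_vertices S) =
  match x with
  | inl u => has_meas S u
  | inr p => lonely S p.1 p.2
  end.
Proof. by rewrite /el_vertices in_set. Qed.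

Lemma el_sym N (S : {set meas N}) a b :
  (a, b) \in el_edges S -> (b, a) \in el_edges S.
Proof.
case: a => [u|p]; case: b => [v|q]; rewrite !el_edgesE //.
case/and3P => /comm_sym -> h1 h2; by rewrite h1 h2.
Qed.

Lemma lonely_meas N (S : {set meas N})
  (Hsym : forall u w v : 'I_N, (((u, w), v) \in S) = (((u, v), w) \in S)) u v :
  lonely S u v -> has_meas S u.
Proof.
rewrite /lonely inE => /andP[/existsP[t /andP[tS H]] nw].
case: t tS H => [[a b] c] tS /=; rewrite !xpair_eqE.
case/or4P => /andP[/eqP eu /eqP ev]; subst.
- by apply/existsP; exists ((a, b), c); rewrite tS eqxx.
- by case/negP: nw; apply/existsP; exists b.
- by apply/existsP; exists ((a, b), c); rewrite tS eqxx.
- by case/negP: nw; apply/existsP; exists c; rewrite Hsym.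
Qed.

Lemma el_end N (S : {set meas N})
  (Hsym : forall u w v : 'I_N, (((u, w), v) \in S) = (((u, v), w) \in S)) a b :
  (a, b) \in el_edges S -> a \in el_vertices S.
Proof.
case: a => [u|p]; case: b => [v|q]; rewrite el_edgesE el_verticesE //=.
- case/and3P => /comm_sym uv _; rewrite /lonely uv /= negbK.
  case/existsP => w wS; by apply/existsP; exists ((u, w), v); rewrite wS eqxx.
- by case/andP => /eqP <-; apply: lonely_meas.
- by case/andP.
Qed.

Theorem corollary1 (N : nat) (S : {set meas N})
  (Hdistinct : forall u w v : 'I_N, ((u, w), v) \in S ->
                 [&& u != w, u != v & w != v])
  (Hsym : forall u w v : 'I_N, (((u, w), v) \in S) = (((u, v), w) \in S))
  (Hconn : forall u v : 'I_N, connect (edge_rel (comm_edges S)) u v) :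
  forall e, e \in el_edges S ->
    kappa (el_edges S) (line_edges (el_edges S)) e
    >= kappa (el_vertices S) (el_edges S) (tail e).
Proof.
move=> e eE.
apply: gen_kappa => //.
- exact: el_sym.
- exact: el_end.
Qed.
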